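(* Let $(Q,\rightarrow)$ be a finite transition system, $\mathscr{R}$ a preorder on $Q$ and $\mathscr{P}\subseteq\mathscr{R}$ an equivalence relation with a representative $E.\mathrm{rep}\in E$ fixed for each block $E$ of $\mathscr{P}$, such that there is no pair of a block $E$ of $\mathscr{P}$ and a block $B$ of $\mathscr{R}$ with $E\rightarrow B$ and $\mathrm{RelCount}_{(\mathscr{P},\mathscr{R})}(E,B)=0$. Let $E$ be a block of $\mathscr{P}$ and $B$ a block of $\mathscr{R}$ with $E\rightarrow B$. Then $E.\mathrm{rep}\in\rightarrow_{\mathscr{R}}^{-1}(\mathscr{R}(B))$, i.e. there is $q$ with $E.\mathrm{rep}\rightarrow_{\mathscr{R}} q$ and $B\,\mathscr{R}\,q$.
   Context: A preorder is a reflexive transitive relation; its blocks are $[q]_{\mathscr{R}}=\{q'\mid q\,\mathscr{R}\,q'\wedge q'\,\mathscr{R}\,q\}$. For sets, $X\rightarrow Y$ means some $x\in X,y\in Y$ have $x\rightarrow y$; $X\,\mathscr{R}\,Y$ means $(X\times Y)\cap\mathscr{R}\ne\emptyset$. $\mathrm{RelCount}_{(\mathscr{P},\mathscr{R})}(E,B)=|\{E'\text{ block of }\mathscr{P}\mid E.\mathrm{rep}\rightarrow E'\wedge B\,\mathscr{R}\,E'\}|$. A transition $q\rightarrow q'$ is $\mathscr{R}$-maximal, $q\rightarrow_{\mathscr{R}}q'$, if for all $q''$, ($q\rightarrow q''$ and $q'\,\mathscr{R}\,q''$) implies $q''\in[q']_{\mathscr{R}}$. *)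

(* Defs.v *)
From mathcomp Require Import all_boot.
Set Implicit Arguments. Unset Strict Implicit. Unset Printing Implicit Defensive.

Section Defs.
Variable Q : finType.

Definition block (R : rel Q) (q : Q) : {set Q} := [set q' | R q q' && R q' q].

Definition blocks (R : rel Q) : {set {set Q}} := [set block R q | q in Q].

Definition setTrans (trans : rel Q) (X Y : {set Q}) : bool :=
  [exists x in X, exists y in Y, trans x y].

Definition setRel (R : rel Q) (X Y : {set Q}) : bool :=
  [exists x in X, exists y in Y, R x y].

Definition RelCount (trans P R : rel Q) (rep : {set Q} -> Q) (E B : {set Q}) : nat :=
  #|[set E' in blocks P | setTrans trans [set rep E] E' && setRel R B E']|.

Definition maxtrans (trans R : rel Q) (q q' : Q) : bool :=
  trans q q' &&
  [forall q'', (trans q q'' && R q' q'') ==> (q'' \in block R q')].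

End Defs.

(* Main.v *)
Require Import Defs.
From mathcomp Require Import all_boot.

Theorem lemma4 (Q : finType) (trans R P : rel Q) (rep : {set Q} -> Q)
  (R_refl : reflexive R) (R_trans : transitive R)
  (P_refl : reflexive P) (P_sym : symmetric P) (P_trans : transitive P)
  (P_sub_R : forall x y, P x y -> R x y)
  (rep_in : forall E, E \in blocks P -> rep E \in E)
  (no_zero : ~ exists E B, [/\ E \in blocks P, B \in blocks R,
                               setTrans trans E B & RelCount trans P R rep E B = 0])
  (E B : {set Q}) (hE : E \in blocks P) (hB : B \in blocks R)
  (hEB : setTrans trans E B) :
  exists q, maxtrans trans R (rep E) q /\ [exists b in B, R b q].
Proof.
have : RelCount trans P R rep E B != 0.
  by apply/eqP => h; apply: no_zero; exists E, B.
rewrite /RelCount cards_eq0 => /set0Pn [E' ].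
rewrite inE => /andP [/imsetP [q0 _ ->] /andP [hT hR]].
case/existsP: hT => x /andP [] ; rewrite inE => /eqP -> /existsP [e1 /andP [he1 ht]].
case/existsP: hR => b /andP [hb /existsP [e2 /andP [he2 hbe2]]].
move: he1 he2; rewrite !inE => /andP [p1 p1'] /andP [p2 p2'].
have Rbe1 : R b e1.
  apply: R_trans hbe2 _; apply: P_sub_R; exact: P_trans p2' p1.
pose S q := trans (rep E) q && [exists b in B, R b q].
have S1 : S e1 by rewrite /S ht; apply/existsP; exists b; rewrite hb.
case: (arg_minnP (fun q => #|[set x | R q x]|) S1) => q Sq Hmin.
exists q; split; last by case/andP: Sq.
rewrite /maxtrans; case/andP: Sq => -> /existsP [b' /andP [hb' Rb']] /=.
apply/forallP => q''; apply/implyP => /andP [tq Rq].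
have Sq'' : S q''.
  rewrite /S tq; apply/existsP; exists b'; rewrite hb'; exact: R_trans Rb' Rq.
have := Hmin _ Sq''.
have sub : [set x | R q'' x] \subset [set x | R q x].
  apply/subsetP => y; rewrite !inE; exact: R_trans.
move=> le.
have eqs : [set x | R q'' x] = [set x | R q x].
  apply/eqP; rewrite eqEcard sub /=; exact: le.
have : q \in [set x | R q x] by rewrite inE.
by rewrite -eqs inE => h; rewrite inE Rq h.
Qed.
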